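(* For $K>K^*:=\frac{b\sigma_1}{b-\mu_0}$ let $G_3(K)=(S(K),I_1(K),0,0,R(K))$ be the unique equilibrium of the system below with $S,I_1,R>0$. Then $K\mapsto R(K)$ and $K\mapsto I_1(K)$ are strictly increasing, $K\mapsto S(K)$ is strictly decreasing, $R(K)\to0$, $I_1(K)\to0$ and $S(K)\to\sigma_1$ as $K\downarrow K^*$, and for all $K>K^*$ $$0<I_1(K)<\frac{\mu_4'-\mu_0}{\alpha_1},\qquad \frac{\mu_1-\mu_4'}{\alpha_1}<S(K)<\frac{\mu_1-\mu_0}{\alpha_1}.$$
   Context: Consider, for $t\ge0$, the system $S'=\big(b(1-\tfrac{N}{K})-\alpha_1I_1-\alpha_2I_2-(\beta_1+\beta_2+\alpha_3)I_{12}-\mu_0\big)S$, $I_1'=\big(b(1-\tfrac{N}{K})+\alpha_1S-\eta_1I_{12}-\gamma_1I_2-\mu_1\big)I_1+\beta_1SI_{12}$, $I_2'=\big(b(1-\tfrac{N}{K})+\alpha_2S-\eta_2I_{12}-\gamma_2I_1-\mu_2\big)I_2+\beta_2SI_{12}$, $I_{12}'=\big(b(1-\tfrac{N}{K})+\alpha_3S+\eta_1I_1+\eta_2I_2-\mu_3\big)I_{12}+(\gamma_1+\gamma_2)I_1I_2$, $R'=\big(b(1-\tfrac{N}{K})-\mu_4'\big)R+\rho_1I_1+\rho_2I_2+\rho_3I_{12}$, where $N=S+I_1+I_2+I_{12}+R$. All parameters $b,K,\alpha_i,\beta_i,\gamma_i,\eta_i,\rho_i,\mu_0,\mu_i'$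 are positive and $\mu_i=\rho_i+\mu_i'$ for $i=1,2,3$; $K$ is regarded as a varying parameter, the others fixed. Standing assumptions: $b>\mu_0$, $b>\mu_i$ ($i=1,2,3$), $b>\mu_4'$, and $\mu_0<\mu_4'<\mu_j'$ for $j=1,2,3$. Set $\sigma_k=(\mu_k-\mu_0)/\alpha_k$ ($k=1,2,3$), assumed to satisfy $\sigma_1<\sigma_2<\sigma_3$, and $S^{**}=\frac{K}{b}(b-\mu_0)$. *)

(* Defs.v *)
From Stdlib Require Import Reals.
From Coquelicot Require Import Coquelicot.
Open Scope R_scope.

Record params := Params {
  b : R; alpha1 : R; alpha2 : R; alpha3 : R;
  beta1 : R; beta2 : R; gamma1 : R; gamma2 : R; eta1 : R; eta2 : R;
  rho1 : R; rho2 : R; rho3 : R;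
  mu0 : R; mu1' : R; mu2' : R; mu3' : R; mu4' : R }.

Definition mu1 (p : params) := rho1 p + mu1' p.
Definition mu2 (p : params) := rho2 p + mu2' p.
Definition mu3 (p : params) := rho3 p + mu3' p.

Definition sigma1 (p : params) := (mu1 p - mu0 p) / alpha1 p.
Definition sigma2 (p : params) := (mu2 p - mu0 p) / alpha2 p.
Definition sigma3 (p : params) := (mu3 p - mu0 p) / alpha3 p.

Definition standing (p : params) : Prop :=
  0 < b p /\ 0 < alpha1 p /\ 0 < alpha2 p /\ 0 < alpha3 p /\
  0 < beta1 p /\ 0 < beta2 p /\ 0 < gamma1 p /\ 0 < gamma2 p /\
  0 < eta1 p /\ 0 < eta2 p /\ 0 < rho1 p /\ 0 < rho2 p /\ 0 < rho3 p /\
  0 < mu0 p /\ 0 < mu1' p /\ 0 < mu2' p /\ 0 < mu3' p /\ 0 < mu4' p /\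
  mu0 p < b p /\ mu1 p < b p /\ mu2 p < b p /\ mu3 p < b p /\ mu4' p < b p /\
  mu0 p < mu4' p /\ mu4' p < mu1' p /\ mu4' p < mu2' p /\ mu4' p < mu3' p /\
  sigma1 p < sigma2 p /\ sigma2 p < sigma3 p.

Definition logis (p : params) (K S I1 I2 I12 Rr : R) : R :=
  b p * (1 - (S + I1 + I2 + I12 + Rr) / K).

Definition fS (p : params) (K S I1 I2 I12 Rr : R) : R :=
  (logis p K S I1 I2 I12 Rr - alpha1 p * I1 - alpha2 p * I2
   - (beta1 p + beta2 p + alpha3 p) * I12 - mu0 p) * S.

Definition fI1 (p : params) (K S I1 I2 I12 Rr : R) : R :=
  (logis p K S I1 I2 I12 Rr + alpha1 p * S - eta1 p * I12 - gamma1 p * I2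
   - mu1 p) * I1 + beta1 p * S * I12.

Definition fI2 (p : params) (K S I1 I2 I12 Rr : R) : R :=
  (logis p K S I1 I2 I12 Rr + alpha2 p * S - eta2 p * I12 - gamma2 p * I1
   - mu2 p) * I2 + beta2 p * S * I12.

Definition fI12 (p : params) (K S I1 I2 I12 Rr : R) : R :=
  (logis p K S I1 I2 I12 Rr + alpha3 p * S + eta1 p * I1 + eta2 p * I2
   - mu3 p) * I12 + (gamma1 p + gamma2 p) * I1 * I2.

Definition fR (p : params) (K S I1 I2 I12 Rr : R) : R :=
  (logis p K S I1 I2 I12 Rr - mu4' p) * Rr
  + rho1 p * I1 + rho2 p * I2 + rho3 p * I12.

Definition is_equilibrium (p : params) (K S I1 I2 I12 Rr : R) : Prop :=
  fS p K S I1 I2 I12 Rr = 0 /\ fI1 p K S I1 I2 I12 Rr = 0 /\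
  fI2 p K S I1 I2 I12 Rr = 0 /\ fI12 p K S I1 I2 I12 Rr = 0 /\
  fR p K S I1 I2 I12 Rr = 0.

Definition G3 (p : params) (K S I1 Rr : R) : Prop :=
  0 < S /\ 0 < I1 /\ 0 < Rr /\ is_equilibrium p K S I1 0 0 Rr.

Definition Kstar (p : params) : R := b p * sigma1 p / (b p - mu0 p).

(* Main.v *)
Require Import Defs.
From Stdlib Require Import Reals Lra Psatz.
From Coquelicot Require Import Coquelicot.
Open Scope R_scope.

Ltac dstand Hp :=
  destruct Hp as (Hb & Ha1 & Ha2 & Ha3 & Hbe1 & Hbe2 & Hg1 & Hg2 & He1 & He2 &
    Hr1 & Hr2 & Hr3 & Hm0 & Hm1' & Hm2' & Hm3' & Hm4' & Hbm0 & Hbm1 & Hbm2 &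
    Hbm3 & Hbm4 & H04 & H41 & H42 & H43 & Hs12 & Hs23).

Lemma key (p : params) (Hp : standing p) K S I Rr : 0 < K -> G3 p K S I Rr ->
  alpha1 p * (S + I) = mu1 p - mu0 p /\ alpha1 p * I < mu4' p - mu0 p /\
  Rr * (mu4' p - mu0 p - alpha1 p * I) = rho1 p * I /\
  K * (b p - mu0 p - alpha1 p * I) = b p * (S + I + Rr).
Proof.
  intros HK (HS & HI & HR & H1 & H2 & H3 & H4 & H5).
  dstand Hp.
  set (L := b p * (1 - (S + I + 0 + 0 + Rr) / K)).
  assert (E1 : (L - alpha1 p * I - mu0 p) * S = 0).
  { apply (eq_trans (y := fS p K S I 0 0 Rr)); [unfold fS, L, logis; ring | exact H1]. }
  assert (E2 : (L + alpha1 p * S - mu1 p) * I = 0).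
  { apply (eq_trans (y := fI1 p K S I 0 0 Rr)); [unfold fI1, L, logis; ring | exact H2]. }
  assert (E3 : (L - mu4' p) * Rr + rho1 p * I = 0).
  { apply (eq_trans (y := fR p K S I 0 0 Rr)); [unfold fR, L, logis; ring | exact H5]. }
  assert (EL : L * K = b p * K - b p * (S + I + Rr)).
  { unfold L. field. lra. }
  apply Rmult_integral in E1. destruct E1 as [E1|E1]; [|lra].
  apply Rmult_integral in E2. destruct E2 as [E2|E2]; [|lra].
  assert (HL : L = alpha1 p * I + mu0 p) by lra.
  rewrite HL in E3, EL.
  assert (Hx : Rr * (mu4' p - mu0 p - alpha1 p * I) = rho1 p * I) by lra.
  repeat split; try lra.
  nra.
Qed.

Lemma Rmono (a c rho x1 x2 R1 R2 : R) : 0 < a -> 0 < rho -> 0 < x1 -> 0 < R1 -> 0 < R2 ->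
  a * x2 < c -> R1 * (c - a * x1) = rho * x1 -> R2 * (c - a * x2) = rho * x2 ->
  x1 < x2 -> R1 < R2.
Proof.
  intros. destruct (Rlt_le_dec R1 R2) as [h|h]; [exact h|].
  assert (R2 * (c - a * x2) <= R1 * (c - a * x2)) by (apply Rmult_le_compat_r; lra).
  assert (R1 * (c - a * x2) < R1 * (c - a * x1)) by (apply Rmult_lt_compat_l; nra).
  assert (rho * x1 < rho * x2) by (apply Rmult_lt_compat_l; lra).
  lra.
Qed.

Lemma Kmono (a b B c rho s K1 K2 x1 x2 R1 R2 : R) : 0 < a -> 0 < b -> 0 < rho ->
  c <= B -> 0 < K1 -> K1 <= K2 -> 0 < x1 -> 0 < x2 -> 0 < R1 -> 0 < R2 ->
  a * x1 < c -> a * x2 < c ->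
  K1 * (B - a * x1) = b * (s + R1) -> K2 * (B - a * x2) = b * (s + R2) ->
  R1 * (c - a * x1) = rho * x1 -> R2 * (c - a * x2) = rho * x2 ->
  x2 < x1 -> False.
Proof.
  intros. assert (R2 < R1) by (eapply (Rmono a c rho x2 x1); eauto).
  assert (K1 * (B - a * x1) <= K2 * (B - a * x1)) by (apply Rmult_le_compat_r; lra).
  assert (K2 * (B - a * x1) < K2 * (B - a * x2)) by (apply Rmult_lt_compat_l; nra).
  assert (b * R2 < b * R1) by (apply Rmult_lt_compat_l; lra).
  nra.
Qed.

Lemma lim_helper (f : R -> R) (k l C : R) : 0 <= C ->
  (forall K, k < K -> Rabs (f K - l) <= C * (K - k)) ->
  filterlim f (at_right k) (locally l).
Proof.
  intros HC H. apply filterlim_locally. intros eps.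
  assert (Hd : 0 < eps / (C + 1)) by (apply Rdiv_lt_0_compat; [apply cond_pos|lra]).
  exists (mkposreal _ Hd). intros y Hy Hky. specialize (H y Hky).
  change (Rabs (f y - l) < eps).
  change (Rabs (y - k) < eps / (C + 1)) in Hy.
  rewrite Rabs_right in Hy by lra.
  assert (C * (y - k) <= C * (eps / (C + 1))) by (apply Rmult_le_compat_l; lra).
  assert (C * (eps / (C + 1)) = eps - eps / (C + 1)) by (field; lra).
  lra.
Qed.

Lemma lt_div (a x y : R) : 0 < a -> a * x < y -> x < y / a.
Proof. intros. apply (Rmult_lt_reg_l a); [lra|]. replace (a * (y / a)) with y by (field; lra). lra. Qed.
Lemma div_lt (a x y : R) : 0 < a -> y < a * x -> y / a < x.
Proof. intros. apply (Rmult_lt_reg_l a); [lra|]. replace (a * (y / a)) with y by (field; lra). lra. Qed.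

Theorem mainTheorem9 (p : params) (Hp : standing p) :
  (* G_3(K) exists and is unique for every K > K* *)
  (forall K, Kstar p < K ->
     (exists S I1 Rr, G3 p K S I1 Rr) /\
     (forall S I1 Rr S' I1' Rr', G3 p K S I1 Rr -> G3 p K S' I1' Rr' ->
        S = S' /\ I1 = I1' /\ Rr = Rr')) /\
  (* properties of K |-> G_3(K) = (S(K), I1(K), 0, 0, R(K)) *)
  (forall S I1 Rr : R -> R,
     (forall K, Kstar p < K -> G3 p K (S K) (I1 K) (Rr K)) ->
     (forall K1 K2, Kstar p < K1 -> K1 < K2 -> Rr K1 < Rr K2) /\
     (forall K1 K2, Kstar p < K1 -> K1 < K2 -> I1 K1 < I1 K2) /\
     (forall K1 K2, Kstar p < K1 -> K1 < K2 -> S K2 < S K1) /\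
     filterlim Rr (at_right (Kstar p)) (locally 0) /\
     filterlim I1 (at_right (Kstar p)) (locally 0) /\
     filterlim S (at_right (Kstar p)) (locally (sigma1 p)) /\
     (forall K, Kstar p < K ->
        0 < I1 K /\ I1 K < (mu4' p - mu0 p) / alpha1 p /\
        (mu1 p - mu4' p) / alpha1 p < S K /\
        S K < (mu1 p - mu0 p) / alpha1 p)).
Proof.
  pose proof Hp as Hp0.
  dstand Hp.
  assert (Hm41 : mu4' p < mu1 p) by (unfold mu1; lra).
  assert (Hsig : alpha1 p * sigma1 p = mu1 p - mu0 p) by (unfold sigma1; field; lra).
  assert (Hsp : 0 < sigma1 p) by nra.
  assert (HKs : Kstar p * (b p - mu0 p) = b p * sigma1 p) by (unfold Kstar; field; lra).
  assert (HKp : 0 < Kstar p) by nra.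
  split.
  - intros K HK. split.
    + set (a := alpha1 p). set (c := mu4' p - mu0 p). set (B := b p - mu0 p).
      set (psi := fun x => b p * (sigma1 p * (c - a * x) + rho1 p * x) - K * (B - a * x) * (c - a * x)).
      assert (Hc : continuity psi) by (intro x0; apply continuity_pt_filterlim; apply (ex_derive_continuous psi); unfold psi; auto_derive; trivial).
      assert (HKB : b p * sigma1 p < K * B) by (unfold B; nra).
      assert (Hc0 : 0 < c) by (unfold c; lra).
      assert (Hac : 0 < c / a) by (apply Rdiv_lt_0_compat; unfold a; lra).
      assert (P0 : psi 0 < 0) by (unfold psi; nra).
      assert (P1 : 0 < psi (c / a)).
      { unfold psi. replace (c - a * (c / a)) with 0 by (field; unfold a; lra).
        assert (0 < rho1 p * (c / a)) by nra. nra. }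
      destruct (IVT psi 0 (c / a) Hc Hac P0 P1) as [z [Hz Hpz]].
      assert (Hz0 : 0 < z) by (destruct (Req_dec z 0); [subst; lra | lra]).
      assert (Hzc : a * z < c).
      { destruct (Req_dec z (c / a)) as [e|e]; [rewrite e in Hpz; lra|].
        assert (z < c / a) by lra.
        assert (a * z < a * (c / a)) by (apply Rmult_lt_compat_l; [unfold a; lra | lra]).
        replace (a * (c / a)) with c in * by (field; unfold a; lra). lra. }
      set (Rz := rho1 p * z / (c - a * z)).
      assert (HRz : 0 < Rz) by (apply Rdiv_lt_0_compat; nra).
      assert (HX : b p * (sigma1 p + Rz) = K * (B - a * z)).
      { apply (Rmult_eq_reg_r (c - a * z)); [|lra].
        replace (b p * (sigma1 p + Rz) * (c - a * z)) with
          (b p * (sigma1 p * (c - a * z) + rho1 p * z)) by (unfold Rz; field; lra).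
        unfold psi in Hpz. lra. }
      exists (sigma1 p - z), z, Rz.
      assert (HL : logis p K (sigma1 p - z) z 0 0 Rz = mu0 p + a * z).
      { unfold logis.
        replace (sigma1 p - z + z + 0 + 0 + Rz) with (sigma1 p + Rz) by ring.
        unfold Rdiv. replace (b p * (1 - (sigma1 p + Rz) * / K)) with
          (b p - (b p * (sigma1 p + Rz)) * / K) by ring.
        rewrite HX. unfold B. field. lra. }
      unfold G3, is_equilibrium. repeat split.
      * assert (a * z < a * sigma1 p) by (unfold a, c in *; rewrite Hsig; lra).
        assert (z < sigma1 p) by (unfold a in *; nra). lra.
      * exact Hz0.
      * exact HRz.
      * unfold fS. rewrite HL. unfold a. ring.
      * unfold fI1. rewrite HL.
        transitivity ((alpha1 p * sigma1 p - (mu1 p - mu0 p)) * z); [unfold a; ring|].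
        rewrite Hsig. ring.
      * unfold fI2. ring.
      * unfold fI12. ring.
      * unfold fR. rewrite HL. unfold Rz. unfold c in *. field. lra.
    + intros S I Rr S' I' Rr' G G'.
      assert (HK0 : 0 < K) by lra.
      pose proof G as (HS & HI & HR & _). pose proof G' as (HS' & HI' & HR' & _).
      destruct (key p Hp0 K S I Rr HK0 G) as (k1 & k2 & k3 & k4).
      destruct (key p Hp0 K S' I' Rr' HK0 G') as (k1' & k2' & k3' & k4').
      assert (Es : S + I = sigma1 p) by (apply (Rmult_eq_reg_l (alpha1 p)); lra).
      assert (Es' : S' + I' = sigma1 p) by (apply (Rmult_eq_reg_l (alpha1 p)); lra).
      rewrite Es in k4. rewrite Es' in k4'.
      assert (EI : I = I').
      { destruct (Rtotal_order I I') as [h|[h|h]]; [|exact h|].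
        - exfalso. apply (Kmono (alpha1 p) (b p) (b p - mu0 p) (mu4' p - mu0 p) (rho1 p)
            (sigma1 p) K K I' I Rr' Rr); auto; lra.
        - exfalso. apply (Kmono (alpha1 p) (b p) (b p - mu0 p) (mu4' p - mu0 p) (rho1 p)
            (sigma1 p) K K I I' Rr Rr'); auto; lra. }
      subst I'. split; [lra|]. split; [reflexivity|].
      apply (Rmult_eq_reg_r (mu4' p - mu0 p - alpha1 p * I)); lra.
  - intros S I Rr HG.
    assert (KEY : forall K, Kstar p < K ->
      0 < S K /\ 0 < I K /\ 0 < Rr K /\
      S K + I K = sigma1 p /\ alpha1 p * I K < mu4' p - mu0 p /\
      Rr K * (mu4' p - mu0 p - alpha1 p * I K) = rho1 p * I K /\
      K * (b p - mu0 p - alpha1 p * I K) = b p * (sigma1 p + Rr K)).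
    { intros K HK. assert (HK0 : 0 < K) by lra. pose proof (HG K HK) as G.
      pose proof G as (HS & HI & HR & _).
      destruct (key p Hp0 K _ _ _ HK0 G) as (k1 & k2 & k3 & k4).
      assert (Es : S K + I K = sigma1 p) by (apply (Rmult_eq_reg_l (alpha1 p)); lra).
      rewrite Es in k4. repeat split; assumption. }
    assert (MI : forall K1 K2, Kstar p < K1 -> K1 < K2 -> I K1 < I K2).
    { intros K1 K2 H1 H2.
      destruct (KEY K1 H1) as (a1 & a2 & a3 & a4 & a5 & a6 & a7).
      destruct (KEY K2 ltac:(lra)) as (b1 & b2 & b3 & b4 & b5 & b6 & b7).
      destruct (Rlt_le_dec (I K1) (I K2)) as [h|h]; [exact h|].
      destruct (Req_dec (I K1) (I K2)) as [e|e].
      - exfalso. rewrite <- e in b6, b7.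
        assert (Rr K1 = Rr K2) by (apply (Rmult_eq_reg_r (mu4' p - mu0 p - alpha1 p * I K1)); lra).
        assert (K1 * (b p - mu0 p - alpha1 p * I K1) < K2 * (b p - mu0 p - alpha1 p * I K1))
          by (apply Rmult_lt_compat_r; lra).
        nra.
      - exfalso. apply (Kmono (alpha1 p) (b p) (b p - mu0 p) (mu4' p - mu0 p) (rho1 p)
            (sigma1 p) K1 K2 (I K1) (I K2) (Rr K1) (Rr K2)); auto; lra. }
    split; [|split; [exact MI|split]].
    + intros K1 K2 H1 H2. pose proof (MI K1 K2 H1 H2).
      destruct (KEY K1 H1) as (a1 & a2 & a3 & a4 & a5 & a6 & a7).
      destruct (KEY K2 ltac:(lra)) as (b1 & b2 & b3 & b4 & b5 & b6 & b7).
      apply (Rmono (alpha1 p) (mu4' p - mu0 p) (rho1 p) (I K1) (I K2)); auto.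
    + intros K1 K2 H1 H2. pose proof (MI K1 K2 H1 H2).
      destruct (KEY K1 H1) as (a1 & a2 & a3 & a4 & a5 & a6 & a7).
      destruct (KEY K2 ltac:(lra)) as (b1 & b2 & b3 & b4 & b5 & b6 & b7).
      lra.
    + assert (BI : forall K, Kstar p < K ->
        Rabs (I K - 0) <= (b p - mu0 p) / (alpha1 p * Kstar p) * (K - Kstar p)).
      { intros K HK. destruct (KEY K HK) as (a1 & a2 & a3 & a4 & a5 & a6 & a7).
        rewrite Rminus_0_r, Rabs_right by lra.
        replace ((b p - mu0 p) / (alpha1 p * Kstar p) * (K - Kstar p)) with
          ((b p - mu0 p) * (K - Kstar p) / (alpha1 p * Kstar p)) by (field; lra).
        apply Rlt_le. apply lt_div; [nra|].
        assert (alpha1 p * I K * Kstar p < alpha1 p * I K * K) by (apply Rmult_lt_compat_l; nra).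
        nra. }
      split; [|split; [|split]].
      * apply (lim_helper _ _ _ ((b p - mu0 p) / b p)).
        { apply Rlt_le, Rdiv_lt_0_compat; lra. }
        intros K HK. destruct (KEY K HK) as (a1 & a2 & a3 & a4 & a5 & a6 & a7).
        rewrite Rminus_0_r, Rabs_right by lra.
        replace ((b p - mu0 p) / b p * (K - Kstar p)) with
          ((b p - mu0 p) * (K - Kstar p) / b p) by (field; lra).
        apply (Rmult_le_reg_l (b p)); [lra|].
        replace (b p * ((b p - mu0 p) * (K - Kstar p) / b p)) with
          ((b p - mu0 p) * (K - Kstar p)) by (field; lra).
        assert (0 < alpha1 p * I K) by nra.
        assert (0 < K * (alpha1 p * I K)) by (apply Rmult_lt_0_compat; lra).
        nra.
      * apply (lim_helper _ _ _ ((b p - mu0 p) / (alpha1 p * Kstar p))).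
        { apply Rlt_le, Rdiv_lt_0_compat; nra. }
        exact BI.
      * apply (lim_helper _ _ _ ((b p - mu0 p) / (alpha1 p * Kstar p))).
        { apply Rlt_le, Rdiv_lt_0_compat; nra. }
        intros K HK. specialize (BI K HK). destruct (KEY K HK) as (a1 & a2 & a3 & a4 & a5 & a6 & a7).
        replace (S K - sigma1 p) with (- (I K - 0)) by lra. rewrite Rabs_Ropp. exact BI.
      * intros K HK. destruct (KEY K HK) as (a1 & a2 & a3 & a4 & a5 & a6 & a7).
        split; [lra|]. split; [apply lt_div; lra|].
        assert (0 < alpha1 p * I K) by nra.
        split; [apply div_lt; [lra|]|apply lt_div; [lra|]];
          replace (alpha1 p * S K) with (alpha1 p * sigma1 p - alpha1 p * I K) by
            (rewrite <- a4; ring); lra.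
Qed.
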